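(* Let $\omega\colon\mathbf Z_+\to(0,+\infty)$ be a positive weight, let $\mu\in\mathbf C\setminus\{0\}$ and let $f(z)=\sum_{k\ge3}c_kz^k\in\mathcal X_\omega$ be such that for every $m\ge1$ and every $n\ge0$, \[\frac{\mu^{-1}c_{(3m+2)2^n}}{\omega((3m+2)2^n)}=\frac{c_{(2m+1)2^n}}{\omega((2m+1)2^n)}\quad\text{and}\quad c_{2^{n+2}}=0.\] Then for every $k\ge3$ with $k\notin\{2^i;\ i\ge2\}$ there exist integer sequences $(m_n)_{n\ge1}$, $(p_n)_{n\ge1}$, $(j_n)_{n\ge1}$ such that: (i) $c_k=\big(\mu^{-n}\omega((2m_1+1)2^{p_1})/\omega((3m_n+2)2^{p_n})\big)\,c_{(3m_n+2)2^{p_n}}$ for every $n\ge1$; (ii) $m_n\ge1$ for every $n\ge1$; (iii) $3m_n+2=T^{j_n}(k)$ for every $n\ge1$; (iv) for every $n\ge1$, $j_{n+1}>j_n$ if and only if $3m_n+2\notin\{2^i;\ i\ge2\}$; (v) $(j_n)_{n\ge1}$ and $((3m_n+2)2^{p_n})_{n\ge1}$ are either both strictly increasing or both stationary.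
   Context: $T\colon\mathbf Z_+\to\mathbf Z_+$ is the modified Collatz map: $T(n)=n/2$ for $n$ even, $T(n)=(3n+1)/2$ for $n$ odd. $\mathcal X_\omega$ is the Hilbert space of holomorphic functions $f(z)=\sum_{n\ge3}c_nz^n$ on the unit disk with $\|f\|_\omega^2=\sum_{n\ge3}|c_n|^2/\omega(n)<\infty$. *)

(* Defs.v *)
From Stdlib Require Import Reals Arith.
From Coquelicot Require Import Coquelicot.

(* Modified Collatz map T on positive integers (T 0 = 0 is irrelevant). *)
Definition T (n : nat) : nat :=
  if Nat.even n then Nat.div n 2 else Nat.div (3 * n + 1) 2.

Definition Titer (j k : nat) : nat := Nat.iter j T k.

Definition pow2_ge4 (n : nat) : Prop := exists i : nat, (2 <= i)%nat /\ n = (2 ^ i)%nat.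

(* f(z) = sum_{n>=3} c_n z^n, represented by its coefficient sequence c,
   belongs to X_omega: c_n = 0 for n < 3, f is holomorphic on the unit disk
   (the power series converges on |z| < 1), and sum |c_n|^2/omega(n) < oo. *)
Definition in_X (omega : nat -> R) (c : nat -> C) : Prop :=
  (forall n : nat, (n < 3)%nat -> c n = 0%C) /\
  (forall z : C, Cmod z < 1 -> ex_pseries c z) /\
  ex_series (fun n : nat => (Cmod (c n)) ^ 2 / omega n).

Definition strictly_incr (s : nat -> nat) : Prop :=
  forall n : nat, (1 <= n)%nat -> (s n < s (S n))%nat.

Definition stationary (s : nat -> nat) : Prop :=
  exists N : nat, (1 <= N)%nat /\ forall n : nat, (N <= n)%nat -> s n = s N.

(* Main.v *)
Require Import Defs.
From Stdlib Require Import Reals Arith Lia Lra Classical.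
From Coquelicot Require Import Coquelicot.

Fixpoint dec_aux (fuel n : nat) : nat * nat :=
  match fuel with
  | O => (0, 0)%nat
  | S f => if Nat.even n then let d := dec_aux f (Nat.div n 2) in (fst d, S (snd d))
           else (Nat.div n 2, 0)%nat
  end.
Definition dec (n : nat) := dec_aux n n.

Lemma half_even y : Nat.div (2 * y) 2 = y.
Proof. rewrite Nat.mul_comm. apply Nat.div_mul. lia. Qed.
Lemma half_odd y : Nat.div (2 * y + 1) 2 = y.
Proof. replace (2*y+1)%nat with (1 + y*2)%nat by lia. rewrite Nat.div_add by lia. reflexivity. Qed.

Lemma dec_aux_spec fuel : forall n, (0 < n <= fuel)%nat ->
  n = ((2 * fst (dec_aux fuel n) + 1) * 2 ^ snd (dec_aux fuel n))%nat.
Proof.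
  induction fuel as [|f IH]; intros n Hn; [lia|]. cbn [dec_aux].
  destruct (Nat.even n) eqn:E.
  - apply Nat.even_spec in E. destruct E as [y ->]. rewrite half_even.
    cbn [fst snd]. rewrite Nat.pow_succ_r'. rewrite (IH y) at 1 by lia. lia.
  - assert (O: Nat.odd n = true) by (rewrite <- Nat.negb_even, E; reflexivity).
    apply Nat.odd_spec in O. destruct O as [y ->]. rewrite half_odd. simpl. lia.
Qed.

Lemma dec_spec n : (0 < n)%nat -> n = ((2 * fst (dec n) + 1) * 2 ^ snd (dec n))%nat.
Proof. intros. apply dec_aux_spec. lia. Qed.

Lemma T_even y : T (2 * y) = y.
Proof. unfold T. rewrite Nat.even_mul. change (Nat.even 2) with true. cbn [orb]. apply half_even. Qed.

Lemma T_odd a : T (2 * a + 1) = (3 * a + 2)%nat.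
Proof. unfold T. rewrite Nat.even_add, Nat.even_mul. change (Nat.even 2) with true. change (Nat.even 1) with false. cbn [orb Bool.eqb].
  replace (3 * (2 * a + 1) + 1)%nat with ((3*a+2)*2)%nat by lia. apply Nat.div_mul. lia. Qed.

Lemma Titer_pow b : forall x, Titer b (x * 2 ^ b) = x.
Proof. induction b as [|b IH]; intros x. unfold Titer; simpl; lia.
  unfold Titer in *. rewrite Nat.iter_succ_r. rewrite Nat.pow_succ_r'.
  replace (x * (2 * 2 ^ b))%nat with (2 * (x * 2 ^ b))%nat by lia. rewrite T_even. apply IH. Qed.

Lemma not_pow2 a b : (1 <= a)%nat -> ~ pow2_ge4 ((2*a+1)*2^b).
Proof.
  intros Ha [i [Hi E]].
  assert (b < i)%nat.
  { destruct (Nat.lt_ge_cases b i) as [|H]; auto.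
    pose proof (Nat.pow_le_mono_r 2 i b ltac:(lia) H). pose proof (Nat.pow_nonzero 2 b ltac:(lia)). nia. }
  replace i with ((i - b) + b)%nat in E by lia. rewrite Nat.pow_add_r in E.
  assert (E2: (2*a+1 = 2^(i-b))%nat).
  { apply Nat.mul_cancel_r with (2^b)%nat. pose proof (Nat.pow_nonzero 2 b). lia. lia. }
  destruct (i - b)%nat as [|d] eqn:D; [lia|]. rewrite Nat.pow_succ_r' in E2. lia.
Qed.

Definition sm (s : nat * nat * nat) := fst (fst s).
Definition sp (s : nat * nat * nat) := snd (fst s).
Definition sj (s : nat * nat * nat) := snd s.
Definition step (s : nat * nat * nat) : nat * nat * nat :=
  let d := dec (3 * sm s + 2) in
  if (fst d =? 0)%nat then s else (fst d, sp s + snd d, sj s + snd d + 1)%nat.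
Definition s1 (k : nat) : nat * nat * nat := (fst (dec k), snd (dec k), snd (dec k) + 1)%nat.
Definition st (k i : nat) := Nat.iter i step (s1 k).
Definition xs (s : nat * nat * nat) := ((3 * sm s + 2) * 2 ^ sp s)%nat.

Lemma stS k i : st k (S i) = step (st k i).
Proof. reflexivity. Qed.

Lemma step_cases s : (1 <= sm s)%nat ->
  let d := dec (3 * sm s + 2) in
  (3 * sm s + 2 = (2 * fst d + 1) * 2 ^ snd d)%nat /\
  ((fst d = 0 /\ step s = s /\ 3 <= snd d)%nat \/
   (1 <= fst d /\ step s = (fst d, sp s + snd d, sj s + snd d + 1))%nat).
Proof.
  intros H d. assert (Hy : (3 * sm s + 2 = (2 * fst d + 1) * 2 ^ snd d)%nat)
    by (apply dec_spec; lia).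
  split; auto. unfold step. fold d.
  destruct (fst d =? 0)%nat eqn:E.
  - apply Nat.eqb_eq in E. left. split; auto. split; auto.
    rewrite E in Hy. destruct (snd d) as [|[|[|b]]]; simpl in Hy; lia.
  - apply Nat.eqb_neq in E. right. split; [lia|reflexivity].
Qed.

Lemma RtoC_nz y : y <> 0%R -> RtoC y <> 0%C.
Proof. intros H E. apply H. apply (f_equal fst) in E. simpl in E. exact E. Qed.

Theorem lemma2p8 (omega : nat -> R) (mu : C) (c : nat -> C) :
  (forall n : nat, (1 <= n)%nat -> 0 < omega n) ->
  mu <> 0%C ->
  in_X omega c ->
  (forall m n : nat, (1 <= m)%nat ->
     (/ mu * c ((3 * m + 2) * 2 ^ n)%nat / RtoC (omega ((3 * m + 2) * 2 ^ n)%nat))%C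
     = (c ((2 * m + 1) * 2 ^ n)%nat / RtoC (omega ((2 * m + 1) * 2 ^ n)%nat))%C) ->
  (forall n : nat, c (2 ^ (n + 2))%nat = 0%C) ->
  forall k : nat, (3 <= k)%nat -> ~ pow2_ge4 k ->
  exists (m p j : nat -> nat),
    (forall n : nat, (1 <= n)%nat ->
       c k = ((/ mu) ^ n * RtoC (omega ((2 * m 1 + 1) * 2 ^ p 1)%nat
                                  / omega ((3 * m n + 2) * 2 ^ p n)%nat)
              * c ((3 * m n + 2) * 2 ^ p n)%nat)%C) /\
    (forall n : nat, (1 <= n)%nat -> (1 <= m n)%nat) /\
    (forall n : nat, (1 <= n)%nat -> (3 * m n + 2)%nat = Titer (j n) k) /\
    (forall n : nat, (1 <= n)%nat ->
       ((j n < j (S n))%nat <-> ~ pow2_ge4 (3 * m n + 2))) /\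
    ((strictly_incr j /\ strictly_incr (fun n => (3 * m n + 2) * 2 ^ p n)%nat) \/
     (stationary j /\ stationary (fun n => (3 * m n + 2) * 2 ^ p n)%nat)).
Proof.
  intros Hw Hmu HX Hrel H0 k Hk Hnp.
  assert (Hk0 : k = ((2 * fst (dec k) + 1) * 2 ^ snd (dec k))%nat) by (apply dec_spec; lia).
  assert (Ha0 : (1 <= fst (dec k))%nat).
  { destruct (fst (dec k)) eqn:E; [|lia]. exfalso. apply Hnp.
    destruct (snd (dec k)) as [|[|b]] eqn:Eb; simpl in Hk0; try lia.
    exists (S (S b)). split; [lia|]. rewrite Hk0. simpl. lia. }
  assert (Hwnz : forall n, (1 <= n)%nat -> RtoC (omega n) <> 0%C).
  { intros n Hn. apply RtoC_nz. specialize (Hw n Hn). lra. }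
  assert (Hxpos : forall s, (1 <= xs s)%nat).
  { intros s. unfold xs. pose proof (Nat.pow_nonzero 2 (sp s)). nia. }
  assert (INV : forall i, (1 <= sm (st k i))%nat /\
     (3 * sm (st k i) + 2 = Titer (sj (st k i)) k)%nat /\
     c k = ((/ mu) ^ (S i) * RtoC (omega k / omega (xs (st k i))) * c (xs (st k i)))%C).
  { induction i as [|i [IH1 [IH2 IH3]]].
    - change (st k 0) with (s1 k). unfold xs, s1, sm, sp, sj. cbn [fst snd].
      split; auto. split.
      + unfold Titer. rewrite (Nat.add_comm (snd (dec k)) 1). rewrite Nat.iter_add. pose proof (Titer_pow (snd (dec k)) (2*fst(dec k)+1)) as TP. rewrite <- Hk0 in TP. unfold Titer in TP. rewrite TP.
                cbn [Nat.iter]. rewrite T_odd. reflexivity.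
      + pose proof (Hrel _ (snd (dec k)) Ha0) as R. rewrite <- Hk0 in R.
        assert (E : c k = (RtoC (omega k) * (/ mu * c ((3 * fst (dec k) + 2) * 2 ^ snd (dec k))%nat
                    / RtoC (omega ((3 * fst (dec k) + 2) * 2 ^ snd (dec k))%nat)))%C).
        { rewrite R. field. apply Hwnz; lia. }
        rewrite E at 1. rewrite RtoC_div by (apply Rgt_not_eq, Hw; pose proof (Nat.pow_nonzero 2 (snd (dec k))); nia).
        simpl Cpow. field. split; auto. apply Hwnz. pose proof (Nat.pow_nonzero 2 (snd (dec k))); nia.
    - rewrite stS. destruct (step_cases (st k i) IH1) as [Hy [[Ea [Es Eb]] | [Ea Es]]];
        rewrite Es.
      + split; auto. split; auto.
        assert (Hc0 : c (xs (st k i)) = 0%C).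
        { unfold xs. rewrite Hy, Ea. rewrite Nat.mul_0_r, Nat.add_0_l, Nat.mul_1_l.
          rewrite <- Nat.pow_add_r.
          replace (snd (dec (3 * sm (st k i) + 2)) + sp (st k i))%nat
            with ((snd (dec (3 * sm (st k i) + 2)) + sp (st k i) - 2) + 2)%nat by lia.
          apply H0. }
        assert (Hck : c k = 0%C) by (rewrite IH3, Hc0; ring).
        rewrite Hc0, Hck. ring.
      + set (s := st k i) in *. set (d := dec (3 * sm s + 2)) in *.
        change (sm (fst d, sp s + snd d, sj s + snd d + 1)%nat) with (fst d).
        change (sj (fst d, sp s + snd d, sj s + snd d + 1)%nat) with (sj s + snd d + 1)%nat.
        split; auto. split.
        * unfold Titer in *. replace (sj s + snd d + 1)%nat with (1 + (snd d + sj s))%nat by lia.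
          rewrite !Nat.iter_add. rewrite <- IH2, Hy. pose proof (Titer_pow (snd d) (2 * fst d + 1)) as TP.
          unfold Titer in TP. rewrite TP.
          cbn [Nat.iter]. rewrite T_odd. reflexivity.
        * assert (Ex : xs s = ((2 * fst d + 1) * 2 ^ (sp s + snd d))%nat).
          { unfold xs. rewrite Hy, Nat.pow_add_r. lia. }
          assert (Ex' : xs (fst d, sp s + snd d, sj s + snd d + 1)%nat
                       = ((3 * fst d + 2) * 2 ^ (sp s + snd d))%nat) by reflexivity.
          rewrite Ex'. pose proof (Hrel _ (sp s + snd d)%nat Ea) as R. rewrite <- Ex in R.
          pose proof (Nat.pow_nonzero 2 (sp s + snd d) ltac:(lia)).
          assert (E : c (xs s) = (RtoC (omega (xs s)) * (/ mu * c ((3 * fst d + 2) * 2 ^ (sp s + snd d))%nat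
                    / RtoC (omega ((3 * fst d + 2) * 2 ^ (sp s + snd d))%nat)))%C).
          { rewrite R. field. apply Hwnz; auto. }
          rewrite IH3, E.
          rewrite !RtoC_div by (apply Rgt_not_eq, Hw; try apply Hxpos; nia).
          change ((/ mu) ^ S (S i))%C with (/ mu * (/ mu) ^ S i)%C.
          field. repeat split; auto; apply Hwnz; try apply Hxpos; try nia; lia. }
  assert (Hk1 : ((2 * sm (st k (1-1)) + 1) * 2 ^ sp (st k (1-1)))%nat = k)
    by (symmetry; exact Hk0).
  exists (fun n => sm (st k (n-1))), (fun n => sp (st k (n-1))), (fun n => sj (st k (n-1))).
  cbv beta. rewrite Hk1.
  split; [|split; [|split; [|split]]].
  - intros n Hn. destruct n as [|n]; [lia|]. replace (S n - 1)%nat with n by lia.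
    exact (proj2 (proj2 (INV n))).
  - intros n Hn. destruct n as [|n]; [lia|]. replace (S n - 1)%nat with n by lia.
    exact (proj1 (INV n)).
  - intros n Hn. destruct n as [|n]; [lia|]. replace (S n - 1)%nat with n by lia.
    exact (proj1 (proj2 (INV n))).
  - intros n Hn. destruct n as [|n]; [lia|]. replace (S n - 1)%nat with n by lia.
    replace (S (S n) - 1)%nat with (S n) by lia. rewrite stS.
    destruct (step_cases (st k n) (proj1 (INV n))) as [Hy [[Ea [Es Eb]]|[Ea Es]]]; rewrite Es.
    + split; intro H; [lia|]. exfalso; apply H. rewrite Hy, Ea.
      exists (snd (dec (3 * sm (st k n) + 2))). split; [lia|]. simpl. lia.
    + change (sj (fst (dec (3 * sm (st k n) + 2)), (sp (st k n) + snd (dec (3 * sm (st k n) + 2)))%nat,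
        (sj (st k n) + snd (dec (3 * sm (st k n) + 2)) + 1)%nat))
        with (sj (st k n) + snd (dec (3 * sm (st k n) + 2)) + 1)%nat.
      split; intro H; [rewrite Hy; apply not_pow2; auto | lia].
  - destruct (classic (exists i, fst (dec (3 * sm (st k i) + 2)) = 0%nat)) as [[i0 Hi0]|Hno].
    + right.
      assert (Fix : forall i, (i0 <= i)%nat -> st k i = st k i0).
      { intros i Hi; induction Hi; auto. rewrite stS, IHHi.
        destruct (step_cases (st k i0) (proj1 (INV i0))) as [_ [[_ [Es _]]|[Ea _]]];
          [exact Es | lia]. }
      split; exists (S i0); split; try lia; intros n Hn;
        rewrite (Fix (n-1)%nat), (Fix (S i0 - 1)%nat) by lia; reflexivity.
    + left. split; intros n Hn; destruct n as [|n]; try lia;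
        replace (S n - 1)%nat with n by lia;
        replace (S (S n) - 1)%nat with (S n) by lia; rewrite stS;
        destruct (step_cases (st k n) (proj1 (INV n))) as [Hy [[Ea _]|[Ea Es]]];
        try (exfalso; apply Hno; eauto; fail); rewrite Es.
      * unfold sj at 2. cbn [snd]. lia.
      * set (s := st k n) in *. set (d := dec (3 * sm s + 2)) in *.
        change (sm (fst d, sp s + snd d, sj s + snd d + 1)%nat) with (fst d).
        change (sp (fst d, sp s + snd d, sj s + snd d + 1)%nat) with (sp s + snd d)%nat.
        rewrite Hy, Nat.pow_add_r.
        pose proof (Nat.pow_nonzero 2 (sp s) ltac:(lia)).
        pose proof (Nat.pow_nonzero 2 (snd d) ltac:(lia)).
        rewrite <- Nat.mul_assoc, (Nat.mul_comm (2 ^ snd d)). assert (HP : (0 < 2 ^ sp s * 2 ^ snd d)%nat) by (apply Nat.mul_pos_pos; lia). revert HP. generalize (2 ^ sp s * 2 ^ snd d)%nat. intros P HP. nia.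
Qed.
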